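(* Let $n$ be an odd integer, and let $a$ and $b$ be distinct positive integers with $a+b=n$. Let $X$ be the circulant graph $X(\mathbb{Z}_{2n}, \{a,-a,b,-b\})$, whose vertex set is $\mathbb{Z}_{2n}$ and in which $u\sim v$ if and only if $v-u\in\{a,-a,b,-b\} \pmod{2n}$; it is a $4$-regular graph. Then the Grover discrete quantum walk on $X$ admits perfect state transfer from vertex $0$ to vertex $n$ at time $2n$, that is, \[U^{2n}\left(\tfrac{1}{2}\, e_0\otimes \mathbf{1}\right) = \tfrac{1}{2}\, e_n\otimes \mathbf{1}.\]
   Context: Let $X$ be a $d$-regular graph on $n$ vertices. Replace each edge $\{u,v\}$ by the two arcs $(u,v)$ and $(v,u)$. The state space is $\mathbb{C}^{nd}$, the space of complex functions on the arcs, with the standard inner product; it is identified with $\mathbb{C}^n\otimes\mathbb{C}^d$, where the arc $(u,v)$ corresponds to the vertex $u$ (its tail) together with one of the $d$ coin directions at $u$. The transition operator is $U=R(I\otimes G)$, where $R$ is the arc-reversal permutation matrix, $(Rf)(u,v)=f(v,u)$, and $G=\frac{2}{d}J-I$ is the $d\times d$ Grover coin ($J$ the all-ones matrix), so that $\big((I\otimes G)f\big)(u,v)=\frac{2}{d}\sum_{w\sim u} f(u,w)-f(u,v)$. For a vertex $u$, $e_u\otimes\mathbf{1}$ denotes the vector that is $1$ on every arc with tail $u$ and $0$ elsewhere, so $\frac{1}{\sqrt d}e_u\otimes\mathbf{1}$ is the uniform superposition over the outgoing arcs of $u$. The graph $X$ admits perfect state transfer from $u$ to $v$ at time $k$ if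 $U^k\left(\frac{1}{\sqrt d}e_u\otimes\mathbf{1}\right)=\frac{1}{\sqrt d}e_v\otimes\mathbf{1}$. *)

(* Defs.v *)
From mathcomp Require Import all_boot all_order all_algebra all_field.
Set Implicit Arguments. Unset Strict Implicit. Unset Printing Implicit Defensive.
Import GRing.Theory Num.Theory.
Local Open Scope ring_scope.

Section GroverWalk.
Variables (T : finType) (adj : rel T).

Definition arc := {x : T * T | adj x.1 x.2}.

Definition tail (e : arc) : T := (val e).1.
Definition head (e : arc) : T := (val e).2.

Definition state := {ffun arc -> algC}.

Definition is_regular (d : nat) : Prop := forall u : T, #|[set v | adj u v]| = d.

Definition coin_op (d : nat) (f : state) : state :=
  [ffun e : arc => (2 / d%:R) * (\sum_(e' : arc | tail e' == tail e) f e') - f e].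

(* arc reversal permutation matrix: (R f)(u,v) = f(v,u) *)
Definition arc_rev_op (f : state) : state :=
  [ffun e : arc => \sum_(e' : arc | val e' == (head e, tail e)) f e'].

Definition grover_U (d : nat) (f : state) : state := arc_rev_op (coin_op d f).

(* (1/sqrt d) e_u (x) 1 *)
Definition uniform_at (d : nat) (u : T) : state :=
  [ffun e : arc => if tail e == u then (sqrtC d%:R)^-1 else 0].

Definition pst (d : nat) (u v : T) (k : nat) : Prop :=
  iter k (grover_U d) (uniform_at d u) = uniform_at d v.

End GroverWalk.

Definition circulant (m : nat) (S : seq 'Z_m) : rel 'Z_m :=
  fun u v => (v - u) \in S.

(* Main.v *)
Require Import Defs.
From mathcomp Require Import all_boot all_order all_algebra all_field.
From mathcomp Require Import ring zify.
Set Implicit Arguments. Unset Strict Implicit. Unset Printing Implicit Defensive.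
Import GRing.Theory Num.Theory.
Local Open Scope ring_scope.

Section Generic.
Variables (T : finType) (adj : rel T).

Definition rep (F : T -> T -> algC) : state adj := [ffun e => F (tail e) (Defs.head e)].

Lemma rev_sum (f : state adj) (x : T * T) (H : adj x.1 x.2) :
  \sum_(e' : Defs.arc adj | val e' == x) f e' = f (exist _ x H).
Proof.
rewrite (big_pred1 (exist (fun y : T * T => adj y.1 y.2) x H)) //.
Qed.

Lemma tail_sum (G : T -> algC) v :
  \sum_(e' : Defs.arc adj | tail e' == v) G (Defs.head e') = \sum_(w | adj v w) G w.
Proof.
have Hs : forall e' : Defs.arc adj, tail e' == v -> adj v (Defs.head e').
  by move=> e' /eqP <-; exact: (valP e').
rewrite (partition_big (fun e' : Defs.arc adj => Defs.head e') (fun w => adj v w) Hs).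
apply: eq_bigr => w Hw.
rewrite (big_pred1 (exist (fun y : T * T => adj y.1 y.2) (v, w) Hw)) //=.
Qed.

Lemma rep_eq (F G : T -> T -> algC) :
  (forall u v, adj u v -> F u v = G u v) -> rep F = rep G.
Proof. by move=> H; apply/ffunP => e; rewrite !ffunE; apply: H; exact: (valP e). Qed.

End Generic.

Section Circ.
Variables (n a b : nat).
Hypotheses (Hn : odd n) (Ha : (0 < a)%N) (Hb : (0 < b)%N) (Hab : a <> b)
  (Hs : (a + b)%N = n).

Local Notation Z := 'Z_(2 * n).
Local Notation S := [:: (a%:R : Z); - a%:R; b%:R; - b%:R].
Local Notation X := (circulant S).

Lemma Hm : (2 <= 2 * n)%N.
Proof. by case: n Hn => [|k] //= _; rewrite mulnS. Qed.

Lemma nat_inj (x y : nat) : (x < 2 * n)%N -> (y < 2 * n)%N ->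
  (x%:R : Z) = y%:R -> x = y.
Proof.
move=> hx hy /(congr1 (@nat_of_ord _)); rewrite !(val_Zp_nat Hm) !modn_small //.
Qed.

Lemma nz (k : nat) : (0 < k)%N -> (k < 2 * n)%N -> (k%:R : Z) != 0.
Proof.
move=> h1 h2; apply/eqP => /(congr1 (@nat_of_ord _)); rewrite (val_Zp_nat Hm) modn_small //=.
by move=> h; rewrite h in h1.
Qed.

Lemma n2 : (n%:R : Z) + n%:R = 0.
Proof.
rewrite -natrD; apply: val_inj; rewrite /= (val_Zp_nat Hm) addnn -mul2n modnn //.
Qed.

Lemma nN : - (n%:R : Z) = n%:R.
Proof. by apply/eqP; rewrite eqr_oppLR -addr_eq0 n2. Qed.

Lemma aE : (a%:R : Z) = - b%:R + n%:R.
Proof. by rewrite -Hs natrD addrCA addNr addr0. Qed.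

Lemma aNE : - (a%:R : Z) = b%:R + n%:R.
Proof. by rewrite aE opprD opprK nN. Qed.

Lemma uniqS : uniq S.
Proof.
have an : (a < n)%N by rewrite -Hs -{1}(addn0 a) ltn_add2l.
have bn : (b < n)%N by rewrite -Hs -{1}(add0n b) ltn_add2r.
have n0 : (n%:R : Z) != 0 by apply: nz; lia.
rewrite /= !inE !negb_or -!addr_eq0 ?eqr_oppLR ?eqr_opp -?addr_eq0 -!natrD.
rewrite !nz ?Hs ?addn_gt0 ?Ha ?Hb //; try lia.
rewrite addrC subr_eq0 /= !andbT.
have nab : forall x y : nat, (x < n)%N -> (y < n)%N -> x <> y -> (x%:R : Z) != y%:R.
  by move=> x y hx hy hxy; apply/eqP => /nat_inj H; apply: hxy; apply: H; lia.
rewrite !nab //; try lia.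
Qed.

Lemma S_neg (s : Z) : s \in S -> - s \in S.
Proof. by rewrite !inE => /or4P [] /eqP ->; rewrite ?opprK eqxx ?orbT. Qed.

Lemma X_sym u v : X u v -> X v u.
Proof. by rewrite /circulant => /S_neg; rewrite opprB. Qed.

Lemma nbr_sum (R : Type) (idx : R) (op : Monoid.com_law idx) (G : Z -> R) v :
  \big[op/idx]_(w | X v w) G w = \big[op/idx]_(s <- S) G (v + s).
Proof.
rewrite (reindex (fun s => v + s)) /=; last first.
  by apply: onW_bij; exists (fun w => w - v) => x /=; rewrite addrC ?addKr ?addrNK.
rewrite (big_uniq _ uniqS); apply: eq_bigl => s.
by rewrite /circulant addrC addKr.
Qed.


Lemma regX : is_regular X 4.
Proof.
move=> u; rewrite -sum1_card.
rewrite (eq_bigl (fun v => X u v)); last by move=> v; rewrite inE.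
by rewrite (nbr_sum _ (fun _ => 1%N)) !big_cons big_nil.
Qed.

Definition step (F : Z -> Z -> algC) : Z -> Z -> algC :=
  fun u v => 2 / 4%:R * (\sum_(s <- S) F v (v + s)) - F v u.

Lemma U_rep F : @grover_U _ X 4 (rep X F) = rep X (step F).
Proof.
apply/ffunP => e; rewrite /grover_U /arc_rev_op !ffunE.
have H : X (Defs.head e, tail e).1 (Defs.head e, tail e).2 by apply: X_sym; exact: (valP e).
rewrite (rev_sum _ H) /coin_op ffunE /=.
rewrite (eq_bigr (fun e' => F (Defs.head e) (Defs.head e'))); last first.
  by move=> e' /eqP He; rewrite ffunE He.
rewrite (@tail_sum _ X (fun w => F (Defs.head e) w)) (nbr_sum _ (fun w => F (Defs.head e) w)).
by rewrite /step ffunE.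
Qed.


Definition agree (F G : Z -> Z -> algC) := forall u v, X u v -> F u v = G u v.

Lemma agree_trans F G H : agree F G -> agree G H -> agree F H.
Proof. by move=> h1 h2 u v h; rewrite h1 // h2. Qed.

Lemma step_agree F G : agree F G -> agree (step F) (step G).
Proof.
move=> h u v huv; rewrite /step (h v u (X_sym huv)); congr (_ * _ - _).
by apply: eq_big_seq => s hs; apply: h; rewrite /circulant addrC addKr.
Qed.

Lemma iter_agree k F G : agree F G -> agree (iter k step F) (iter k step G).
Proof. by move=> h; elim: k => //= k IH; exact: step_agree. Qed.

Lemma iterU k F : iter k (@grover_U _ X 4) (rep X F) = rep X (iter k step F).
Proof. by elim: k => //= k ->; exact: U_rep. Qed.

Definition Add (F G : Z -> Z -> algC) : Z -> Z -> algC := fun u v => F u v + G u v.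
Definition Neg (F : Z -> Z -> algC) : Z -> Z -> algC := fun u v => - F u v.

Lemma step_Add F G u v : step (Add F G) u v = Add (step F) (step G) u v.
Proof. rewrite /step /Add big_split /=. ring. Qed.

Lemma step_Neg F u v : step (Neg F) u v = Neg (step F) u v.
Proof. rewrite /step /Neg sumrN. ring. Qed.

Lemma iter_Add k F G :
  agree (iter k step (Add F G)) (Add (iter k step F) (iter k step G)).
Proof.
elim: k => [//|k IH] u v huv /=.
by rewrite -step_Add; exact: (step_agree IH huv).
Qed.

Lemma iter_Neg k F : agree (iter k step (Neg F)) (Neg (iter k step F)).
Proof.
elim: k => [//|k IH] u v huv /=.
by rewrite -step_Neg; exact: (step_agree IH huv).
Qed.

Definition lifted (L : Z -> Z -> algC) :=
  forall u v, L (u + n%:R) v = L u v /\ L u (v + n%:R) = L u v.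

Lemma avg (p q : algC) : 2 / 4%:R * (q + (p + (p + q))) - p = q.
Proof.
have h : (4%:R : algC) != 0 by rewrite pnatr_eq0.
by field.
Qed.

Lemma avg' (p q : algC) : 2 / 4%:R * (q + (p + (p + q))) - q = p.
Proof.
have h : (4%:R : algC) != 0 by rewrite pnatr_eq0.
by field.
Qed.

Lemma step_lifted L : lifted L -> agree (step L) (fun u v => L v (v + v - u)).
Proof.
move=> hL u v huv.
have E1 : L v (v + a%:R) = L v (v - b%:R) by rewrite aE addrA (proj2 (hL _ _)).
have E2 : L v (v - a%:R) = L v (v + b%:R) by rewrite aNE addrA (proj2 (hL _ _)).
rewrite /step !big_cons big_nil addr0 E1 E2.
rewrite /circulant in huv.
set t := v - u in huv.
have uE : u = v - t by rewrite /t; ring.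
rewrite uE; have -> : v + v - (v - t) = v + t by ring.
move: huv; rewrite !inE => /or4P [] /eqP ->; by rewrite ?opprK ?E1 ?E2 ?avg ?avg'.
Qed.

Lemma lifted_step L : lifted L -> lifted (fun u v => L v (v + v - u)).
Proof.
move=> hL u v; split.
- have -> : v + v - (u + n%:R) = (v + v - u) + n%:R by rewrite opprD nN addrA.
  by rewrite (proj2 (hL _ _)).
- have -> : v + n%:R + (v + n%:R) - u = (v + v - u) + (n%:R + n%:R) by ring.
  by rewrite n2 addr0 (proj1 (hL _ _)).
Qed.

Lemma iter_lifted k L : lifted L ->
  agree (iter k step L) (fun u v => L (u + (v - u) *+ k) (v + (v - u) *+ k)).
Proof.
elim: k L => [|k IH] L hL u v huv.
  by rewrite /= !mulr0n !addr0.
rewrite iterSr (iter_agree k (step_lifted hL) huv).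
rewrite (IH _ (lifted_step hL) u v huv) /= mulrS.
set D := (v - u) *+ k.
by congr (L _ _); ring.
Qed.

Lemma natn_half (k : nat) : (k%:R : Z) *+ n = 0 \/ (k%:R : Z) *+ n = n%:R.
Proof.
elim: k => [|k [IH|IH]]; first by left; rewrite mul0rn.
- by right; rewrite mulrS mulrnDl IH addr0.
- by left; rewrite mulrS mulrnDl IH n2.
Qed.

Lemma halfS d : d \in S -> d *+ n = 0 \/ d *+ n = n%:R.
Proof.
have hN : forall k, (- (k%:R : Z)) *+ n = 0 \/ (- (k%:R : Z)) *+ n = n%:R.
  move=> k; rewrite mulNrn; case: (natn_half k) => ->; rewrite ?oppr0 ?nN; by [left|right].
rewrite !inE => /or4P [] /eqP ->; [exact: natn_half|exact: hN|exact: natn_half|exact: hN].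
Qed.

Lemma iter_n L : lifted L -> agree (iter n step L) L.
Proof.
move=> hL u v huv; rewrite (iter_lifted n hL huv).
have [->|->] := halfS huv; first by rewrite !addr0.
by rewrite (proj1 (hL _ _)) (proj2 (hL _ _)).
Qed.

Lemma iter_2n L : lifted L -> agree (iter (2 * n) step L) L.
Proof.
move=> hL.
have h : forall m, m = (n + n)%N -> agree (iter m step L) L.
  move=> m ->; rewrite iterD.
  exact: agree_trans (iter_agree n (iter_n hL)) (iter_n hL).
by apply: h; rewrite mul2n addnn.
Qed.

Section Delta.
Variable d : Z -> algC.
Hypothesis hd : forall x, d (x + n%:R) = - d x.

Definition D0 : Z -> Z -> algC := fun u v => d u.

Lemma step_D0 : agree (step D0) (fun u v => d v).
Proof.
move=> u v _; rewrite /step /D0 !big_cons big_nil addr0.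
have h : (4%:R : algC) != 0 by rewrite pnatr_eq0.
by field.
Qed.

Lemma step_D1 : agree (step (fun u v => d v)) (Neg D0).
Proof.
move=> u v _; rewrite /step /Neg /D0 !big_cons big_nil addr0.
rewrite aNE aE !addrA !hd; ring.
Qed.

Lemma Neg_agree F G : agree F G -> agree (Neg F) (Neg G).
Proof. by move=> h u v huv; rewrite /Neg h. Qed.

Lemma iter2_D0 : agree (iter 2 step D0) (Neg D0).
Proof.
move=> u v huv /=.
by rewrite (step_agree step_D0 huv) step_D1.
Qed.

Lemma iter_D0 k : agree (iter (k.*2) step D0) (if odd k then Neg D0 else D0).
Proof.
elim: k => [//|k IH].
have -> : (k.+1).*2 = (2 + k.*2)%N by rewrite doubleS.
rewrite iterD.
apply: agree_trans (iter_agree 2 IH) _.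
rewrite [odd k.+1]/=; case: (odd k).
- move=> u v huv.
  rewrite (iter_Neg 2 D0 huv) /Neg.
  have := iter2_D0 huv; rewrite /Neg => ->; by rewrite opprK.
- exact: iter2_D0.
Qed.

Lemma iter_2n_D0 : agree (iter (2 * n) step D0) (Neg D0).
Proof.
have h : forall m, m = n.*2 -> agree (iter m step D0) (Neg D0).
  by move=> m ->; have := iter_D0 n; rewrite Hn.
by apply: h; rewrite mul2n.
Qed.

End Delta.

Lemma n_neq0 : (n%:R : Z) != 0.
Proof.
apply: nz; first by rewrite -Hs addn_gt0 Ha.
have : (0 < n)%N by rewrite -Hs addn_gt0 Ha.
lia.
Qed.

Lemma Add_agree F F' G G' : agree F F' -> agree G G' -> agree (Add F G) (Add F' G').
Proof. by move=> h1 h2 u v huv; rewrite /Add h1 // h2. Qed.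

Lemma uniform_rep (x : Z) c : c = (sqrtC 4%:R)^-1 ->
  @uniform_at _ X 4 x = rep X (fun u v => if u == x then c else 0).
Proof. by move=> ->; apply/ffunP => e; rewrite !ffunE. Qed.

Lemma pstX : pst X 4 0 n%:R (2 * n).
Proof.
rewrite /pst.
set c : algC := (sqrtC 4%:R)^-1.
rewrite !(uniform_rep _ (erefl c)) iterU.
have h0n : ((0 : Z) == n%:R) = false by rewrite eq_sym (negbTE n_neq0).
have hn0 : ((n%:R : Z) == 0) = false by rewrite (negbTE n_neq0).
set L := fun u v : Z => if (u == 0) || (u == n%:R) then c / 2 else 0.
set dl := fun x : Z => if x == 0 then c / 2 else if x == n%:R then - (c / 2) else 0.
have e1 : forall x : Z, (x + n%:R == 0) = (x == n%:R) by move=> x; rewrite addr_eq0 nN.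
have e2 : forall x : Z, (x + n%:R == n%:R) = (x == 0).
  by move=> x; rewrite -{2}(add0r n%:R) (inj_eq (addIr _)).
have hL : lifted L by move=> u v; rewrite /L e1 e2 orbC.
have hd : forall x, dl (x + n%:R) = - dl x.
  move=> x; rewrite /dl e1 e2; case: (eqVneq x 0) => [->|h0].
    by rewrite h0n.
  case: (eqVneq x n%:R) => [_|hn].
    by rewrite ?eqxx opprK.
  by rewrite oppr0.
apply: rep_eq.
have A0 : agree (fun u v => if u == 0 then c else 0) (Add L (D0 dl)).
  move=> u v _; rewrite /Add /L /D0 /dl.
  case: (eqVneq u 0) => [->|h0]; first by rewrite ?eqxx /= -splitr.
  rewrite /=; case: (eqVneq u n%:R) => [_|hn]; first by rewrite ?eqxx ?hn0 subrr.
  by rewrite addr0.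
apply: (agree_trans (iter_agree _ A0)).
apply: (agree_trans (iter_Add _ _ _)).
apply: (agree_trans (Add_agree (iter_2n hL) (iter_2n_D0 hd))).
move=> u v _; rewrite /Add /L /Neg /D0 /dl.
case: (eqVneq u 0) => [->|h0]; first by rewrite ?eqxx ?h0n /= subrr.
rewrite /=; case: (eqVneq u n%:R) => [_|hn]; first by rewrite ?eqxx ?hn0 opprK -splitr.
by rewrite oppr0 addr0.
Qed.

End Circ.

Unset Implicit Arguments.
Theorem mainTheorem1 (n a b : nat) :
  odd n -> (0 < a)%N -> (0 < b)%N -> a <> b -> (a + b)%N = n ->
  let X := circulant [:: (a%:R : 'Z_(2 * n)); - a%:R; b%:R; - b%:R] in
  is_regular X 4 /\ pst X 4 0 (n%:R) (2 * n).
Proof.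
move=> Hn Ha Hb Hab Hs X; split.
- exact: regX.
- exact: pstX.
Qed.
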